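(* Let $H$ be a strongly connected simple digraph, let $k$ be a positive integer, and let $T$ be a tournament that does not contain $k$ pairwise vertex-disjoint topological minor copies of $H$. Then there is a set $X$ of at most $2d_{\mathrm{pw}}\|H\|\cdot k\log k$ vertices of $T$ such that $T-X$ does not contain $H$ as a topological minor.
   Context: $\|H\|:=|V(H)|+|A(H)|$; logarithms are base 2. A tournament is a simple digraph with exactly one arc between every pair of distinct vertices. A topological minor copy of $H$ in a digraph $G$ is a subgraph $\widehat H$ of $G$ with a map sending vertices of $H$ to distinct vertices of $\widehat H$ and arcs $(u,v)$ of $H$ to directed paths from the image of $u$ to the image of $v$ that are internally vertex-disjoint, contain no image of a vertex of $H$ as an internal vertex, and together cover every arc and every non-image vertex of $\widehat H$ exactly once; $G$ contains $H$ as a topological minor if it has such a subgraph. An interval decomposition of $T$ assigns to each vertex $v$ a nonempty closed integer interval $I(v)$ such that whenever $\max I(u)<\min I(v)$ the arc between $u,v$ is $(u,v)$; its width is $\max_{\alpha\in\mathbb{Z}}|\{v:\alpha\in I(v)\}|$, and $\mathrm{pw}(T)$ is the minimum width. $d_{\mathrm{pw}}$ is a fixed constant such that every tournament not containing a simple digraph $H'$ as a topological minor has pathwidth at most $d_{\mathrm{pw}}\|H'\|$ (such a constant exists by a result of Fomin and Pilipczuk). *)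

(* Defs.v *)
From Stdlib Require Import Reals ZArith.
From mathcomp Require Import all_boot.
Set Implicit Arguments. Unset Strict Implicit. Unset Printing Implicit Defensive.

(* A digraph on a finite vertex type V is an arc relation a : rel V
   ((u,v) is an arc iff a u v).  Simple = no loops (no parallel arcs is
   automatic for a relation). *)
Definition simple_digraph (V : finType) (a : rel V) : Prop := irreflexive a.

Definition tournament (V : finType) (a : rel V) : Prop :=
  irreflexive a /\ forall u v : V, u != v -> a u v = ~~ a v u.

Definition strongly_connected (V : finType) (a : rel V) : Prop :=
  forall u v : V, connect a u v.

Definition dg_size (V : finType) (a : rel V) : nat :=
  #|V| + #|[set p : V * V | a p.1 p.2]|.

(* A topological minor copy of h in g: an injective vertex map phi and, for
   each arc (u,v) of h, the list P u v of internal vertices of a directed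
   path of g from phi u to phi v; paths are internally vertex-disjoint and
   contain no branch vertex phi w as an internal vertex.  (The subgraph
   \hat H is the union of the branch vertices and these paths.) *)
Definition tm_copy (VG VH : finType) (g : rel VG) (h : rel VH)
    (phi : VH -> VG) (P : VH -> VH -> seq VG) : Prop :=
  [/\ injective phi,
      (forall u v, h u v ->
         [/\ path g (phi u) (rcons (P u v) (phi v)), uniq (P u v)
           & forall w, phi w \notin P u v])
    & (forall u v u' v', h u v -> h u' v' -> (u, v) != (u', v') ->
         forall x, x \in P u v -> x \notin P u' v')].

Definition tm_verts (VG VH : finType) (h : rel VH)
    (phi : VH -> VG) (P : VH -> VH -> seq VG) : {set VG} :=
  [set x | [exists w, phi w == x] || [exists p : VH * VH, h p.1 p.2 && (x \in P p.1 p.2)]].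

Definition contains_tm (VG VH : finType) (g : rel VG) (h : rel VH) : Prop :=
  exists (phi : VH -> VG) (P : VH -> VH -> seq VG), tm_copy g h phi P.

Definition contains_k_disjoint_tm (VG VH : finType) (g : rel VG) (h : rel VH)
    (k : nat) : Prop :=
  exists (phi : 'I_k -> VH -> VG) (P : 'I_k -> VH -> VH -> seq VG),
    (forall i, tm_copy g h (phi i) (P i)) /\
    (forall i j, i != j -> [disjoint tm_verts h (phi i) (P i) & tm_verts h (phi j) (P j)]).

Definition del_verts (V : finType) (g : rel V) (X : {set V}) : rel {x : V | x \notin X} :=
  fun x y => g (val x) (val y).

(* Interval decomposition: I(v) = [l v, r v] (integer intervals); if
   max I(u) < min I(v) then (u,v) is an arc. *)
Definition interval_decomp (V : finType) (a : rel V) (l r : V -> Z) : Prop :=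
  (forall v, (l v <= r v)%Z) /\ (forall u v, (r u < l v)%Z -> a u v).

Definition pw_le (V : finType) (a : rel V) (c : R) : Prop :=
  exists l r : V -> Z, interval_decomp a l r /\
    forall al : Z, Rle (INR #|[set v | (l v <=? al)%Z && (al <=? r v)%Z]|) c.

(* d is a valid choice of the constant d_pw *)
Definition is_dpw (d : R) : Prop :=
  forall (V W : finType) (t : rel V) (h : rel W),
    tournament t -> simple_digraph h -> ~ contains_tm t h ->
    pw_le t (Rmult d (INR (dg_size h))).

Definition log2 (x : R) : R := Rdiv (ln x) (ln 2).

(* Main.v *)
Require Import Defs.
From Stdlib Require Import Reals ZArith Lia Lra Classical.
From mathcomp Require Import all_boot.
From mathcomp Require Import zify.
Set Implicit Arguments. Unset Strict Implicit. Unset Printing Implicit Defensive.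
Delimit Scope R_scope with Re.

Lemma tm_embed (U V W : finType) (g : rel U) (t : rel V) (h : rel W) (f : U -> V)
  (finj : injective f) (gt : forall x y, g x y = t (f x) (f y))
  (phi : W -> U) (P : W -> W -> seq U) :
  tm_copy g h phi P ->
  tm_copy t h (f \o phi) (fun u v => map f (P u v)) /\
  (forall S : {set V}, (forall y, f y \in S) -> tm_verts h (f \o phi) (fun u v => map f (P u v)) \subset S).
Proof.
case=> phiinj Hp Hd; split.
- split.
  + exact: inj_comp.
  + move=> u v huv; have [p1 p2 p3] := Hp u v huv; split.
    * rewrite /= -map_rcons path_map.
      by rewrite (eq_path (e' := g)) // => x y /=; rewrite gt.
    * by rewrite map_inj_uniq.
    * by move=> w /=; rewrite mem_map // p3.
  + move=> u v u' v' huv hu'v' ne x /mapP [y yP ->].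
    by rewrite mem_map // (Hd u v u' v').
- move=> S HS; apply/subsetP => x; rewrite inE.
  by case/orP => [/existsP [w /eqP <-] | /existsP [p /andP [_ /mapP [y _ ->]]]]; apply: HS.
Qed.


Lemma tm_vertsP (VG VH : finType) (h : rel VH) (phi : VH -> VG) (P : VH -> VH -> seq VG) x :
  x \in tm_verts h phi P <-> (exists w, phi w = x) \/ (exists u v, h u v /\ x \in P u v).
Proof.
rewrite inE; split.
- case/orP => [/existsP [w /eqP <-] | /existsP [p /andP [hp xp]]]; first by left; exists w.
  by right; exists p.1, p.2.
- case=> [[w <-] | [u [v [huv xp]]]]; apply/orP; [left | right]; apply/existsP.
  + by exists w.
  + by exists (u, v); rewrite /= huv.
Qed.

Definition copyIn (V W : finType) (t : rel V) (h : rel W) (S : {set V}) : Prop :=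
  exists phi P, tm_copy t h phi P /\ tm_verts h phi P \subset S.

Definition kcopiesIn (V W : finType) (t : rel V) (h : rel W) (S : {set V}) (k : nat) : Prop :=
  exists (phi : 'I_k -> W -> V) (P : 'I_k -> W -> W -> seq V),
    (forall i, tm_copy t h (phi i) (P i) /\ tm_verts h (phi i) (P i) \subset S) /\
    (forall i j, i != j -> [disjoint tm_verts h (phi i) (P i) & tm_verts h (phi j) (P j)]).

Definition kH (W : finType) (h : rel W) (k : nat) : rel ('I_k * W)%type :=
  fun p q => (p.1 == q.1) && h p.2 q.2.
Arguments kH {W} h k.

Lemma kH_copy (V W : finType) (t : rel V) (h : rel W) (k : nat) (S : {set V})
  phi' P' : tm_copy t (kH h k) phi' P' -> tm_verts (kH h k) phi' P' \subset S ->
  kcopiesIn t h S k.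
Proof.
case=> inj Hp Hd sub.
have hkE i u j v : kH h k (i, u) (j, v) = (i == j) && h u v by [].
exists (fun i w => phi' (i, w)), (fun i u v => P' (i, u) (i, v)); split.
- move=> i; split; first split.
  + by move=> w1 w2 /inj [].
  + move=> u v huv /=; have [] := Hp (i, u) (i, v); first by rewrite hkE eqxx.
    by move=> p1 p2 p3; split=> // w; apply: p3.
  + move=> u v u' v' huv hu'v' ne /=; apply: (Hd (i,u) (i,v) (i,u') (i,v')); rewrite ?hkE ?eqxx //.
    by apply: contra ne => /eqP [-> ->].
  + apply/subsetP => x /tm_vertsP [[w <-] | [u [v [huv xp]]]]; apply: (subsetP sub); apply/tm_vertsP.
    * by left; exists (i, w).
    * by right; exists (i, u), (i, v); rewrite hkE eqxx.
- move=> i j ne; rewrite disjoint_subset; apply/subsetP => x Hx; rewrite inE; apply/negP => Hy.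
  move/tm_vertsP: Hx => Hx; move/tm_vertsP: Hy => Hy.
  case: Hx Hy => [[w <-] | [u [v [huv xp]]]] [[w' ew] | [u' [v' [hu'v' xp']]]].
  + by move/inj: ew => [] /eqP; rewrite eq_sym (negbTE ne).
  + have [|_ _ p3] := Hp (j, u') (j, v'); first by rewrite hkE eqxx.
    by move: (p3 (i, w)); rewrite xp'.
  + have [|_ _ p3] := Hp (i, u) (i, v); first by rewrite hkE eqxx.
    by move: (p3 (j, w')); rewrite ew xp.
  + move: (Hd (i, u) (i, v) (j, u') (j, v')); rewrite !hkE !eqxx huv hu'v' => /(_ isT isT).
    by rewrite xpair_eqE eqE /= (negbTE ne) /= => /(_ isT x xp); rewrite xp'.
Qed.

Lemma kH_simple (W : finType) (h : rel W) k : simple_digraph h -> simple_digraph (kH h k).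
Proof. by move=> hi p; rewrite /kH eqxx /=; apply: hi. Qed.

Lemma kH_size (W : finType) (h : rel W) k : dg_size (kH h k) = k * dg_size h.
Proof.
rewrite /dg_size mulnDr card_prod card_ord; congr (_ + _).
pose f (q : 'I_k * (W * W)) := ((q.1, q.2.1), (q.1, q.2.2)).
have -> : [set p | kH h k p.1 p.2] = f @: setX [set: 'I_k] [set p : W * W | h p.1 p.2].
  apply/setP => [[[i u] [j v]]]; rewrite inE /kH /=; apply/idP/imsetP.
  - by case/andP => /eqP <- huv; exists (i, (u, v)); rewrite ?inE.
  - case=> [[i' [u' v']]]; rewrite inE => /andP [_]; rewrite inE /= => huv [-> -> -> ->].
    by rewrite eqxx.
rewrite card_imset ?cardsX ?cardsT ?card_ord //.
by move=> [i1 [u1 v1]] [i2 [u2 v2]] [-> -> _ ->].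
Qed.

Lemma kcopies_combine (V W : finType) (t : rel V) (h : rel W) (A B : {set V}) a b :
  kcopiesIn t h A a -> kcopiesIn t h B b -> [disjoint A & B] -> kcopiesIn t h (A :|: B) (a + b).
Proof.
move=> [phA [PA [HA DA]]] [phB [PB [HB DB]]] AB.
exists (fun i => match split i with inl j => phA j | inr j => phB j end).
exists (fun i => match split i with inl j => PA j | inr j => PB j end).
split.
- move=> i; case: (split i) => j.
  + by have [c s] := HA j; split => //; apply: subset_trans s (subsetUl _ _).
  + by have [c s] := HB j; split => //; apply: subset_trans s (subsetUr _ _).
- move=> i j ne; have Ki := splitK i; have Kj := splitK j.
  case: (split i) Ki => i1 Ki; case: (split j) Kj => j1 Kj.
  + apply: DA; apply: contra ne => /eqP e; by rewrite -Ki -Kj e.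
  + have [_ s1] := HA i1; have [_ s2] := HB j1.
    exact: (disjointWl s1 (disjointWr s2 AB)).
  + have [_ s1] := HB i1; have [_ s2] := HA j1.
    rewrite disjoint_sym in AB; exact: (disjointWl s1 (disjointWr s2 AB)).
  + apply: DB; apply: contra ne => /eqP e; by rewrite -Ki -Kj e.
Qed.

Lemma kcopies_emptyW (V W : finType) (t : rel V) (h : rel W) (S : {set V}) k :
  (W -> False) -> kcopiesIn t h S k.
Proof.
move=> W0.
exists (fun i w => False_rect V (W0 w)), (fun i u v => [::]); split.
- move=> i; split; first split.
  + by move=> w; case: (W0 w).
  + by move=> u; case: (W0 u).
  + by move=> u; case: (W0 u).
  + by apply/subsetP => x /tm_vertsP [[w _] | [u _]]; case: (W0 w) || case: (W0 u).
- move=> i j _; rewrite disjoint_subset; apply/subsetP => x /tm_vertsP [[w _] | [u _]].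
  + case: (W0 w).
  + case: (W0 u).
Qed.

Lemma kcopies_setT (V W : finType) (t : rel V) (h : rel W) k :
  kcopiesIn t h setT k -> contains_k_disjoint_tm t h k.
Proof. by move=> [ph [P [H D]]]; exists ph, P; split => // i; case: (H i). Qed.

Lemma side_lemma (V W : finType) (t : rel V) (h : rel W) (L R : {set V}) :
  strongly_connected h -> (forall x y, x \in R -> y \in L -> ~~ t x y) ->
  forall phi P, tm_copy t h phi P -> tm_verts h phi P \subset L :|: R ->
  tm_verts h phi P \subset L \/ tm_verts h phi P \subset R.
Proof.
move=> sc noback phi P [_ Hp _] sub.
have l1 : forall s x, path t x s -> x \in R -> all (mem (L :|: R)) s -> all (mem R) s.
  elim=> //= y s IH x /andP [txy ps] xR /andP [yLR allS].
  have yR : y \in R.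
    move: yLR; rewrite inE => /orP [yL|//].
    by move: (noback x y xR yL); rewrite txy.
  by rewrite yR /= (IH y).
have l2 : forall s x, path t x s -> all (mem (L :|: R)) (x :: s) -> has (mem R) (x :: s) ->
    last x s \in R.
  elim=> [|y s IH] x.
  - by move=> _ _ /=; rewrite orbF.
  - move=> /= /andP [txy ps] /andP [xLR allS] /orP [xR | hasS].
    + have := l1 (y :: s) x; rewrite /= txy ps => /(_ isT xR allS) /andP [yR aR].
      have : last y s \in y :: s by apply: mem_last.
      rewrite inE => /orP [/eqP -> // | ls]; exact: (allP aR).
    + by apply: IH.
have allLR : forall u v, h u v -> all (mem (L :|: R)) (rcons (P u v) (phi v)).
  move=> u v huv; apply/allP => z; rewrite mem_rcons inE => /orP [/eqP -> | zP];
    apply: (subsetP sub); apply/tm_vertsP; [left; exists v | right; exists u, v] => //.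
have arc : forall u v, h u v -> phi u \in R -> all (mem R) (rcons (P u v) (phi v)).
  move=> u v huv uR; have [p1 _ _] := Hp u v huv.
  exact: (l1 _ _ p1 uR (allLR u v huv)).
case: (classic (exists w0, phi w0 \in R)) => [[w0 Hw0] | NR].
- have allR : forall w, phi w \in R.
    move=> w; have := sc w0 w; move/connectP => [p pth ->].
    elim: p w0 pth Hw0 => //= y p IH w0 /andP [hw0y pth] Hw0; apply: IH pth _.
    by have := arc _ _ hw0y Hw0; rewrite all_rcons => /andP [].
  right; apply/subsetP => x /tm_vertsP [[w <-] | [u [v [huv xp]]]] //.
  have := arc _ _ huv (allR u); rewrite all_rcons => /andP [_ /allP]; apply; exact: xp.
- left; apply/subsetP => x xV; have := subsetP sub x xV; rewrite inE => /orP [//|xR].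
  exfalso; case/tm_vertsP: xV => [[w ew] | [u [v [huv xp]]]].
  + by apply: NR; exists w; rewrite ew.
  + have [p1 _ _] := Hp u v huv.
    have := l2 _ _ p1; rewrite last_rcons => H; apply: NR; exists v; apply: H.
    * rewrite /= (allLR u v huv) andbT; apply: (subsetP sub); apply/tm_vertsP; left; by exists u.
    * apply/hasP; exists x => //; by rewrite !(inE, mem_rcons) xp !orbT.
Qed.


Definition Fk (d : R) (N : nat) (m : nat) : R :=
  Rmult (Rmult (Rmult (Rmult (INR 2) d) (INR N)) (INR m)) (log2 (INR m)).

Lemma half_facts k : (2 <= k)%N ->
  [/\ (1 <= k./2)%N, (k./2 <= k - k./2)%N, (k - k./2 + k./2 = k)%N & (2 * (k - k./2) ^ 2 <= k ^ 2)%N].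
Proof.
move=> k2; split; try lia. nia.
Qed.

Lemma ln_le' (x y : R) : (0 < x)%Re -> (x <= y)%Re -> (ln x <= ln y)%Re.
Proof.
move=> x0 /Rle_lt_or_eq_dec [xy | ->]; last by apply: Rle_refl.
by apply: Rlt_le; apply: ln_increasing.
Qed.

Lemma F_step (d : R) (N k : nat) : (2 <= k)%N -> (0 <= d * INR N)%Re ->
  (Fk d N (k - k./2) + Fk d N (k./2) + d * INR N * INR k <= Fk d N k)%Re.
Proof.
move=> k2 c0; have [b1 ba sab sq] := half_facts k2.
rewrite /Fk /log2.
set c := (d * INR N)%Re in c0 *.
set a := INR (k - k./2); set b := INR k./2; set K := INR k.
have Hb1 : (1 <= b)%Re by rewrite /b; apply: (le_INR 1); apply/leP.
have Hba : (b <= a)%Re by rewrite /b /a; apply: le_INR; apply/leP.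
have HK : (K = a + b)%Re by rewrite /K /a /b -plus_INR; congr INR; lia.
have Hsq : (2 * (a * a) <= K * K)%Re.
  have sq' : (2 * ((k - k./2) * (k - k./2)) <= k * k)%coq_nat by lia.
  have := le_INR _ _ sq'; rewrite !mult_INR -/a -/K.
  by have -> : INR 2 = 2%Re by [].
have ln2 : (0 < ln 2)%Re by have := ln_lt_2; lra.
have lnb0 : (0 <= ln b)%Re by rewrite -ln_1; apply: ln_le'; lra.
have lnba : (ln b <= ln a)%Re by apply: ln_le'; lra.
have key : (ln 2 + 2 * ln a <= 2 * ln K)%Re.
  have -> : (ln 2 + 2 * ln a = ln (2 * (a * a)))%Re by rewrite !ln_mult; nra.
  have -> : (2 * ln K = ln (K * K))%Re by rewrite ln_mult; nra.
  apply: ln_le'; nra.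
have e2 : INR 2 = 2%Re by [].
rewrite e2.
have H1 : (a * ln a + b * ln b <= K * ln a)%Re by nra.
have H2 : (2 * (a * ln a + b * ln b) + K * ln 2 <= 2 * K * ln K)%Re by nra.
apply: (Rmult_le_reg_r (ln 2)) => //.
have -> : ((2 * d * INR N * a * (ln a / ln 2) + 2 * d * INR N * b * (ln b / ln 2) + c * K) * ln 2
   = c * (2 * (a * ln a + b * ln b) + K * ln 2))%Re by rewrite /c; field; lra.
have -> : (2 * d * INR N * K * (ln K / ln 2) * ln 2 = c * (2 * K * ln K))%Re by rewrite /c; field; lra.
by apply: Rmult_le_compat_l.
Qed.


Lemma search (Q : nat -> Prop) N : Q 0 -> exists n, (n <= N)%N /\ Q n /\ (n = N \/ ~ Q n.+1).
Proof.
move=> Q0; elim: N => [|N [n [nN [Qn H]]]].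
- by exists 0; split => //; split => //; left.
- case: H => [En | nQ].
  + subst n; case: (classic (Q N.+1)) => H.
    * by exists N.+1; split => //; split => //; left.
    * by exists N; split => //; split => //; right.
  + by exists n; split; [lia | split => //; right].
Qed.


Lemma kcopies_mono (V W : finType) (t : rel V) (h : rel W) (A B : {set V}) m :
  kcopiesIn t h A m -> A \subset B -> kcopiesIn t h B m.
Proof.
move=> [ph [P [H D]]] AB; exists ph, P; split => // i.
by have [c s] := H i; split => //; apply: subset_trans s AB.
Qed.

Lemma kcopies_one (V W : finType) (t : rel V) (h : rel W) (A : {set V}) :
  copyIn t h A -> kcopiesIn t h A 1.
Proof.
move=> [ph [P [c s]]]; exists (fun _ => ph), (fun _ => P); split => // i j.
by rewrite (ord1 i) (ord1 j) eqxx.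
Qed.

Lemma kcopies_nonempty (V W : finType) (t : rel V) (h : rel W) (A : {set V}) m (w0 : W) :
  kcopiesIn t h A m -> (0 < m)%N -> exists x, x \in A.
Proof.
move=> [ph [P [H D]]] m0; have [_ s] := H (Ordinal m0).
exists (ph (Ordinal m0) w0); apply: (subsetP s); apply/tm_vertsP; left; by exists w0.
Qed.

Lemma claim (d : R) (hd : is_dpw d) (W : finType) (h : rel W) (V : finType) (t : rel V) :
  simple_digraph h -> strongly_connected h -> tournament t ->
  forall k, (0 < k)%N -> forall S : {set V}, ~ kcopiesIn t h S k ->
  exists X : {set V}, (INR #|X| <= Fk d (dg_size h) k)%Re /\ ~ copyIn t h (S :\: X).
Proof.
move=> hs sc tt; elim/ltn_ind => k IH k0 S nk.
have [w0 _] : exists w0 : W, True.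
  apply: NNPP => nW; apply: nk; apply: kcopies_emptyW => w; apply: nW; by exists w.
case: (ltnP 1 k) => [k2 | k1]; last first.
  have e1 : k = 1 by lia.
  subst k; exists set0; split.
  - rewrite cards0 /Fk /log2 /= ln_1 /Rdiv Rmult_0_l Rmult_0_r; apply: Rle_refl.
  - rewrite setD0 => c; apply: nk; exact: kcopies_one.
have [b1 ba sab _] := half_facts k2.
pose tU : rel {x : V | x \in S} := fun x y => t (val x) (val y).
have ttU : tournament tU.
  case: tt => ti ta; split; first by move=> x; apply: ti.
  move=> u v uv; apply: ta; apply: contra uv => /eqP e; apply/eqP; exact: val_inj.
have ncU : ~ contains_tm tU (kH h k).
  move=> [ph [P c]].
  have [c' s'] := tm_embed (g := tU) (f := val) val_inj (fun x y => erefl) c.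
  apply: nk; apply: (kH_copy c'); apply: s' => y; exact: valP.
have [l [r [[lr iv] wd]]] := hd _ _ _ _ ttU (kH_simple (k:=k) hs) ncU.
rewrite kH_size in wd.
pose lS x := if (insub x : option {x : V | x \in S}) is Some u then l u else 0%Z.
pose rS x := if (insub x : option {x : V | x \in S}) is Some u then r u else 0%Z.
have lSE : forall x (Hx : x \in S), lS x = l (Sub x Hx) by move=> x Hx; rewrite /lS insubT.
have rSE : forall x (Hx : x \in S), rS x = r (Sub x Hx) by move=> x Hx; rewrite /rS insubT.
pose Ls al := [set x in S | (rS x <? al)%Z].
pose Bs al := [set x in S | (lS x <=? al)%Z && (al <=? rS x)%Z].
pose Rs al := [set x in S | (al <? lS x)%Z].
have lrS : forall x, x \in S -> (lS x <= rS x)%Z by move=> x Hx; rewrite (lSE x Hx) (rSE x Hx).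
have ivS : forall x y, x \in S -> y \in S -> (rS x < lS y)%Z -> t x y.
  move=> x y Hx Hy; rewrite (rSE x Hx) (lSE y Hy) => /iv; by rewrite /tU !SubK.
have noback : forall al x y, x \in Rs al -> y \in Ls al -> ~~ t x y.
  move=> al x y; rewrite !inE => /andP [Hx /Z.ltb_lt xa] /andP [Hy /Z.ltb_lt ya].
  have tyx : t y x by apply: ivS => //; lia.
  have ne : y != x by apply/eqP => e; subst; have := lrS x Hx; lia.
  by case: tt => _ ta; rewrite -(ta y x ne) tyx.
have disjLR : forall al, [disjoint Ls (al + 1)%Z & Rs al].
  move=> al; rewrite disjoint_subset; apply/subsetP => x; rewrite !inE.
  move=> /andP [Hx /Z.ltb_lt xa]; apply/negP => /andP [_ /Z.ltb_lt ya].
  by have := lrS x Hx; lia.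
have coverLR : forall al, S :\: Bs al \subset Ls al :|: Rs al.
  move=> al; apply/subsetP => x; rewrite !inE => /andP [nB Hx]; rewrite Hx /= in nB *.
  move: nB; case: Z.leb_spec0 => H1; case: Z.leb_spec0 => H2 //= _;
    case: Z.ltb_spec0 => H3; case: Z.ltb_spec0 => H4 //=; lia.
have wB : forall al, (INR #|Bs al| <= d * INR (dg_size h) * INR k)%Re.
  move=> al.
  have cB : #|Bs al| <= #|[set v : {x : V | x \in S} | (l v <=? al)%Z && (al <=? r v)%Z]|.
    apply: leq_trans (leq_imset_card val _); apply: subset_leq_card; apply/subsetP => x.
    rewrite inE => /andP [Hx H]; apply/imsetP; exists (Sub x Hx).
    + by rewrite inE -(lSE x Hx) -(rSE x Hx).
    + by rewrite SubK.
  apply: Rle_trans (le_INR _ _ (elimT leP cB)) _; apply: Rle_trans (wd al) _.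
  have -> : INR (k * dg_size h) = (INR k * INR (dg_size h))%Re by rewrite -mult_INR.
  by apply: Req_le; ring.
have c0 : (0 <= d * INR (dg_size h))%Re.
  have := wB 0%Z; have := pos_INR #|Bs 0%Z|.
  have : (0 < INR k)%Re by apply: lt_0_INR; apply/leP.
  nra.
pose M := \max_(x in S) (Z.abs_nat (lS x) + Z.abs_nat (rS x)).
have Mb : forall x, x \in S -> (- Z.of_nat M <= lS x)%Z /\ (rS x <= Z.of_nat M)%Z.
  move=> x Hx.
  have := leq_bigmax_cond (F := fun x => Z.abs_nat (lS x) + Z.abs_nat (rS x)) x Hx.
  rewrite -/M => /leP H; lia.
have a0 : (0 < k - k./2)%N by lia.
pose Q n := ~ kcopiesIn t h (Ls (- Z.of_nat M + Z.of_nat n)%Z) (k - k./2).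
have Q0 : Q 0.
  move=> c; have [x] := kcopies_nonempty w0 c a0.
  rewrite inE => /andP [Hx /Z.ltb_lt]; have := Mb x Hx; have := lrS x Hx; lia.
have [n [nN [Qn alt]]] := search (2 * M).+1 Q0.
pose al := (- Z.of_nat M + Z.of_nat n)%Z.
have nR : ~ kcopiesIn t h (Rs al) k./2.
  case: alt => [En | nQ] c.
  - have [x] := kcopies_nonempty w0 c b1.
    rewrite inE => /andP [Hx /Z.ltb_lt]; have := Mb x Hx; have := lrS x Hx.
    rewrite /al En; lia.
  - apply: nk; move/NNPP: nQ => nQ.
    have e : (- Z.of_nat M + Z.of_nat n.+1 = al + 1)%Z by rewrite /al; lia.
    rewrite e in nQ.
    have := kcopies_combine nQ c (disjLR al); rewrite sab => cc.
    apply: kcopies_mono cc _; apply/subsetP => x; rewrite !inE.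
    by case/orP => /andP [Hx _].
have [X1 [cX1 nX1]] := IH (k - k./2) ltac:(lia) a0 (Ls al) Qn.
have [X2 [cX2 nX2]] := IH (k./2) ltac:(lia) b1 (Rs al) nR.
exists (X1 :|: X2 :|: Bs al); split.
- have cU : #|X1 :|: X2 :|: Bs al| <= #|X1| + #|X2| + #|Bs al|.
    rewrite !cardsU; lia.
  apply: Rle_trans (le_INR _ _ (elimT leP cU)) _.
  have -> : INR (#|X1| + #|X2| + #|Bs al|) = (INR #|X1| + INR #|X2| + INR #|Bs al|)%Re.
    by rewrite -!plus_INR.
  eapply Rle_trans; last exact: (F_step k2 c0).
  by have := wB al; lra.
- move=> [ph [P [c s]]].
  have sLR : tm_verts h ph P \subset Ls al :|: Rs al.
    apply: subset_trans (coverLR al); apply/subsetP => x xv; have := subsetP s x xv.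
    rewrite !in_setD !in_setU negb_or => /andP [/andP [_ ->] ->] //.
  case: (side_lemma sc (noback al) c sLR) => sub.
  + apply: nX1; exists ph, P; split => //; apply/subsetP => x xv.
    rewrite in_setD (subsetP sub x xv) andbT; have := subsetP s x xv.
    by rewrite in_setD !in_setU; case: (x \in X1).
  + apply: nX2; exists ph, P; split => //; apply/subsetP => x xv.
    rewrite in_setD (subsetP sub x xv) andbT; have := subsetP s x xv.
    by rewrite in_setD !in_setU; case: (x \in X2); rewrite ?orbT.
Qed.

Theorem lemma21 (d : R) (hd : is_dpw d)
  (W : finType) (h : rel W) (V : finType) (t : rel V) (k : nat) :
  simple_digraph h -> strongly_connected h -> (0 < k)%N ->
  tournament t -> ~ contains_k_disjoint_tm t h k ->
  exists X : {set V},
    Rle (INR #|X|)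
      (Rmult (Rmult (Rmult (Rmult (INR 2) d) (INR (dg_size h))) (INR k)) (log2 (INR k))) /\
    ~ contains_tm (@del_verts V t X) h.
Proof.
move=> hs sc k0 tt nk.
have nk' : ~ kcopiesIn t h setT k by move=> c; apply: nk; exact: kcopies_setT.
have [X [cX nX]] := claim hd hs sc tt k0 nk'.
exists X; split; first exact: cX.
move=> [ph [P c]].
have [c' s'] := tm_embed (g := @del_verts V t X) (f := val) val_inj (fun x y => erefl) c.
apply: nX; exists (val \o ph), (fun u v => map val (P u v)); split => //.
apply: s' => y; rewrite in_setD in_setT andbT; by case: y.
Qed.
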